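(* Let $a,b\in\mathbb{Z}$ with $\gcd(a,b)=1$, and suppose $\{G_n(a,b)\}$ has the same Gibonacci cycle mod $5$ as the Lucas numbers, i.e. there exists $r\ge0$ with $G_n(a,b)\equiv L_{n+r}\pmod 5$ for all $n\ge1$. Then $M_{(a,b)}=M_L$, where $M_L=\{2,4,6,7,14\}\cup\{3^j: j\ge1\}$.
   Context: For integers $a,b$ with $\gcd(a,b)=1$, the Gibonacci sequence $\{G_n(a,b)\}_{n\ge1}$ is defined by $G_1=a$, $G_2=b$, $G_{n+1}=G_{n-1}+G_n$. The Lucas numbers are $L_n=G_n(1,3)$. A sequence is complete mod $m$ if every residue class modulo $m$ contains some term of the sequence. $M_{(a,b)}$ denotes the set of integers $m\ge2$ such that $\{G_n(a,b)\}$ is complete mod $m$, and $M_L=M_{(1,3)}$. *)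

(* Defs.v *)
From mathcomp Require Import all_boot all_order all_algebra.
Set Implicit Arguments. Unset Strict Implicit. Unset Printing Implicit Defensive.
Import GRing.Theory Num.Theory.
Local Open Scope ring_scope.

(* gib_pair a b k = (G_{k+1}, G_{k+2}) for the Gibonacci sequence G_1 = a, G_2 = b. *)
Fixpoint gib_pair (a b : int) (k : nat) : int * int :=
  match k with
  | 0%N => (a, b)
  | k'.+1 => let p := gib_pair a b k' in (p.2, p.1 + p.2)
  end.

(* G_n(a,b), meaningful for n >= 1 (G 0 is a junk value equal to a). *)
Definition gib (a b : int) (n : nat) : int := (gib_pair a b n.-1).1.

Definition lucas (n : nat) : int := gib 1 3 n.

Definition complete_mod (a b : int) (m : nat) : Prop :=
  forall x : int, exists n : nat, (1 <= n)%N /\ (gib a b n = x %[mod m%:Z])%Z.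

Definition inM (a b : int) (m : nat) : Prop := (2 <= m)%N /\ complete_mod a b m.

Definition inML (m : nat) : Prop := inM 1 3 m.

(* Main.v *)
Require Import Defs.
From mathcomp Require Import all_boot all_order all_algebra all_field.
From mathcomp Require Import zify ring lra.
Set Implicit Arguments. Unset Strict Implicit. Unset Printing Implicit Defensive.
Import GRing.Theory Num.Theory.


Lemma struct m : (0 < m)%N -> (forall q, prime q -> (q %| m)%N -> q \in [:: 2; 3; 7]%N) ->
  [&& ~~ (8 %| m)%N, ~~ (12 %| m)%N, ~~ (18 %| m)%N, ~~ (21 %| m)%N, ~~ (28 %| m)%N & ~~ (49 %| m)%N] ->
  m \in [:: 1; 2; 4; 6; 7; 14]%N \/ exists j, (1 <= j)%N /\ m = (3 ^ j)%N.
Proof.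
move: m; elim/ltn_ind => m IH m0 hq H.
case: (ltngtP m 1) => [|m1|->]; [lia| |by left].
have qp := pdiv_prime m1. have qd := pdiv_dvd m.
set q := pdiv m in qp qd.
have em : m = (m %/ q * q)%N by rewrite divnK.
have m'0 : (0 < m %/ q)%N by rewrite divn_gt0 ?prime_gt0 // dvdn_leq.
have m'lt : (m %/ q < m)%N by rewrite ltn_Pdiv ?prime_gt1.
have dm : forall d, (d %| m %/ q)%N -> (d %| m)%N by move=> d hd; rewrite em dvdn_mulr.
have IH' := IH _ m'lt m'0 (fun r hr hd => hq r hr (dm r hd)).
have H' : [&& ~~ (8 %| m %/ q)%N, ~~ (12 %| m %/ q)%N, ~~ (18 %| m %/ q)%N, ~~ (21 %| m %/ q)%N, ~~ (28 %| m %/ q)%N & ~~ (49 %| m %/ q)%N].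
  move: H => /andP [h1 /andP [h2 /andP [h3 /andP [h4 /andP [h5 h6]]]]].
  by rewrite (contra (dm _) h1) (contra (dm _) h2) (contra (dm _) h3) (contra (dm _) h4) (contra (dm _) h5) (contra (dm _) h6).
have hq3 := hq q qp qd.
have R := IH' H'.
move: (m %/ q) em R => k em R.
move: R H hq3; rewrite em.
case => [hk|[j [hj ->]]] H hr.
  move: hk hr H; rewrite !inE => /orP [/eqP->|/orP[/eqP->|/orP[/eqP->|/orP[/eqP->|/orP[/eqP->|/eqP->]]]]] /or3P [] /eqP ->; try (by left); try (by []).
  by move=> _; right; exists 1%N.
move: hr H; rewrite !inE => /or3P [] /eqP ->.
- case: j hj => [|[|j]] // _.
    by left.
  move=> H; have hd : (18 %| 3 ^ j.+2 * 2)%N by rewrite !expnS mulnC !mulnA dvdn_mulr.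
  by rewrite hd /= !andbF in H.
- by move=> _; right; exists j.+1; split => //; rewrite expnSr.
- case: j hj => [|j] // _.
  move=> H; have hd : (21 %| 3 ^ j.+1 * 7)%N by rewrite expnS mulnC mulnA dvdn_mulr.
  by rewrite hd /= !andbF in H.
Qed.

Local Open Scope ring_scope.


Lemma gp_S a b k : gib_pair a b k.+1 = ((gib_pair a b k).2, (gib_pair a b k).1 + (gib_pair a b k).2).
Proof. by []. Qed.

Lemma gp_add a b m k :
  gib_pair a b (m + k) =
  ((gib_pair 1 0 k).1 * (gib_pair a b m).1 + (gib_pair 1 0 k).2 * (gib_pair a b m).2,
   (gib_pair 1 0 k).2 * (gib_pair a b m).1 + ((gib_pair 1 0 k).1 + (gib_pair 1 0 k).2) * (gib_pair a b m).2).
Proof.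
elim: k => [|k IH]; first by rewrite addn0 /=; case: (gib_pair a b m) => x y /=; congr (_,_); ring.
by rewrite addnS gp_S IH gp_S /=; congr (_,_); ring.
Qed.

Definition nrm (p : int * int) : int := p.2 ^+ 2 - p.2 * p.1 - p.1 ^+ 2.

Lemma gp_nrm a b k : nrm (gib_pair a b k) = (-1) ^+ k * nrm (a, b).
Proof.
elim: k => [|k IH]; first by rewrite /= mul1r.
rewrite gp_S exprS -mulrA -IH /nrm /=; ring.
Qed.

Lemma gp_cong (d a b a' b' : int) k : (d %| a - a')%Z -> (d %| b - b')%Z ->
  (d %| (gib_pair a b k).1 - (gib_pair a' b' k).1)%Z /\ (d %| (gib_pair a b k).2 - (gib_pair a' b' k).2)%Z.
Proof.
move=> ha hb; elim: k => [|k [IH1 IH2]] //=.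
split=> //. have -> : (gib_pair a b k).1 + (gib_pair a b k).2 - ((gib_pair a' b' k).1 + (gib_pair a' b' k).2)
  = ((gib_pair a b k).1 - (gib_pair a' b' k).1) + ((gib_pair a b k).2 - (gib_pair a' b' k).2) by ring.
by rewrite rpredD.
Qed.

Lemma gp3 i : exists al be : int,
  gib_pair 1 0 (8 * 3 ^ i) = (1 + 3 * 3 ^+ i * (1 + 3 * al), 3 * 3 ^+ i * (1 + 3 * be)).
Proof.
elim: i => [|i [al [be IH]]]; first by exists 1, 2.
have -> : (8 * 3 ^ i.+1 = 8 * 3 ^ i + 8 * 3 ^ i + 8 * 3 ^ i)%N by rewrite expnS; lia.
rewrite (gp_add 1 0 (8 * 3 ^ i + 8 * 3 ^ i)) (gp_add 1 0 (8 * 3 ^ i)) IH /=.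
set f := (3 : int) ^+ i.
set u := 1 + 3 * al. set v := 1 + 3 * be.
exists (al + f * (u^+2 + v^+2) + f^+2 * (u^+3 + 3*u*v^+2 + v^+3)).
exists (be + f * (2*u*v + v^+2) + f^+2 * (3*u^+2*v + 3*u*v^+2 + 2*v^+3)).
rewrite exprS -/f /u /v; congr (_,_); ring.
Qed.


Lemma gib_lift a b n i : (1 <= n)%N -> exists w : int,
  gib a b (n + 8 * 3 ^ i) = gib a b n + 3 * 3 ^+ i * gib a b (n + 2) + 9 * 3 ^+ i * w.
Proof.
move=> hn; have [al [be H]] := gp3 i.
rewrite /gib.
have -> : ((n + 8 * 3 ^ i).-1 = n.-1 + 8 * 3 ^ i)%N by lia.
have -> : ((n + 2).-1 = n.-1 + 2)%N by lia.
rewrite (gp_add a b n.-1 (8 * 3 ^ i)) (gp_add a b n.-1 2) H /=.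
exists (al * (gib_pair a b n.-1).1 + be * (gib_pair a b n.-1).2).
ring.
Qed.

Lemma gib_liftk a b i k : forall n, (1 <= n)%N -> exists w : int,
  gib a b (n + k * (8 * 3 ^ i)) = gib a b n + 3 * 3 ^+ i * k%:R * gib a b (n + 2) + 9 * 3 ^+ i * w.
Proof.
elim: k => [|k IH] n hn.
  by exists 0; rewrite mul0n addn0 mulr0 mul0r addr0 mulr0 addr0.
have [w1 H1] := @gib_lift a b (n + k * (8 * 3 ^ i)) i ltac:(lia).
have [w2 H2] := IH (n + 2)%N ltac:(lia).
have [w3 H3] := IH n hn.
have -> : (n + k.+1 * (8 * 3 ^ i) = n + k * (8 * 3 ^ i) + 8 * 3 ^ i)%N by rewrite mulSn; lia.
have E : (n + k * (8 * 3 ^ i) + 2 = n + 2 + k * (8 * 3 ^ i))%N by lia.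
rewrite E in H1.
rewrite H1 H2 H3.
exists (w3 + 3 ^+ i * k%:R * gib a b (n + 2 + 2) + 3 * 3 ^+ i * w2 + w1).
rewrite -addn1 natrD. ring.
Qed.

Lemma t1 (e : int) : ~~ (3 %| e)%Z -> (3 %| 1 - e * e)%Z.
Proof. nia. Qed.
Lemma t2 (e d : int) : ~~ (3 %| e)%Z -> (3 %| d + (`|(- (d*e)) %% 3|%:Z)%Z * e)%Z.
Proof.
move=> he; have h1 := @t1 e he.
have h2 : (`|(- (d*e)) %% 3|%:Z)%Z = ((- (d*e)) %% 3)%Z by rewrite gez0_abs // modz_ge0.
rewrite h2.
have h3 := divz_eq (- (d * e)) 3.
set q := ((- (d * e)) %/ 3)%Z in h3 *. set r := ((- (d * e)) %% 3)%Z in h2 h3 *.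
have hr : r = -(d*e) - q*3 by rewrite [in RHS]h3; ring.
have -> : d + r * e = d * (1 - e * e) + 3 * (- q * e) by rewrite hr; ring.
apply: rpredD; [exact: dvdz_mull | exact: dvdz_mulr (dvdzz 3)].
Qed.

Lemma dvd_mod (d m : int) : (d %| m - (m %% d)%Z)%Z.
Proof.
have h := divz_eq m d. apply/dvdzP; exists (m %/ d)%Z. by rewrite {1}h; ring.
Qed.

Lemma gib_cong (d a b a' b' : int) n : (d %| a - a')%Z -> (d %| b - b')%Z ->
  (d %| gib a b n - gib a' b' n)%Z.
Proof. by move=> ha hb; case: (gp_cong n.-1 ha hb). Qed.

Definition base3_ok := all (fun a' => all (fun b' => all (fun x' =>
  ((a' == 0) && (b' == 0))%N || has (fun n => (3 %| gib a'%:Z b'%:Z n - x'%:Z)%Z &&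
     ~~ (3 %| gib a'%:Z b'%:Z (n+2))%Z) (iota 1 8)) (iota 0 3)) (iota 0 3)) (iota 0 3).

Lemma base3_okT : base3_ok. Proof. by vm_compute. Qed.

Lemma modz3 (x : int) : (x %% 3)%Z = (`|(x %% 3)%Z|%N)%:Z /\ (`|(x %% 3)%Z| < 3)%N.
Proof.
have h0 : (0 <= (x %% 3)%Z) by rewrite modz_ge0.
have h1 : ((x %% 3)%Z < 3) by rewrite ltz_pmod.
split; first by rewrite gez0_abs.
lia.
Qed.

Lemma base3 a b : ~~ ((3 %| a)%Z && (3 %| b)%Z) -> forall x : int,
  exists n, (1 <= n)%N /\ (3 %| gib a b n - x)%Z /\ ~~ (3 %| gib a b (n+2))%Z.
Proof.
move=> hab x.
have [ea la] := modz3 a. have [eb lb] := modz3 b. have [ex lx] := modz3 x.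
have := base3_okT; rewrite /base3_ok.
move/allP/(_ `|(a %% 3)%Z|%N); rewrite mem_iota add0n => /(_ la).
move/allP/(_ `|(b %% 3)%Z|%N); rewrite mem_iota add0n => /(_ lb).
move/allP/(_ `|(x %% 3)%Z|%N); rewrite mem_iota add0n => /(_ lx).
rewrite -ea -eb -ex.
case/orP.
  case/andP => /eqP h1 /eqP h2; exfalso; move: hab.
  have : (x %% 3)%Z = 0 -> True by [].
  move=> _. apply/negP; apply/negPn; apply/andP; split; apply/dvdz_mod0P.
    by rewrite ea h1.
  by rewrite eb h2.
case/hasP => n; rewrite mem_iota => /andP [hn1 _] /andP [h1 h2].
have ca := dvd_mod 3 a. have cb := dvd_mod 3 b.
exists n; split => //; split.
  have -> : gib a b n - x = (gib a b n - gib (a %% 3)%Z (b %% 3)%Z n) + (gib (a %% 3)%Z (b %% 3)%Z n - (x %% 3)%Z) - (x - (x %% 3)%Z) by ring.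
  apply: rpredB; [apply: rpredD; [exact: gib_cong | exact: h1] | exact: dvd_mod].
apply: contra h2 => h.
have -> : gib (a %% 3)%Z (b %% 3)%Z (n + 2) = gib a b (n + 2) - (gib a b (n+2) - gib (a %% 3)%Z (b %% 3)%Z (n + 2)) by ring.
by apply: rpredB => //; exact: gib_cong.
Qed.

Lemma lift3 a b : ~~ ((3 %| a)%Z && (3 %| b)%Z) -> forall i, forall x : int,
  exists n, (1 <= n)%N /\ (3 * 3 ^+ i %| gib a b n - x)%Z /\ ~~ (3 %| gib a b (n+2))%Z.
Proof.
move=> hab; elim => [|i IH] x; first by rewrite expr0 mulr1; exact: base3.
have [n [hn [/dvdzP [d hd] he]]] := IH x.
set e := gib a b (n + 2) in he.
set k := `|((- (d * e)) %% 3)%Z|%N.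
have [w hw] := @gib_liftk a b i k n hn.
exists (n + k * (8 * 3 ^ i))%N; split; first lia.
split.
  have h3 := @t2 e d he.
  case/dvdzP: h3 => t ht.
  have -> : gib a b (n + k * (8 * 3 ^ i)) - x = 3 * 3 ^+ i.+1 * (t + w).
    rewrite hw -/e.
    have -> : gib a b n = d * (3 * 3 ^+ i) + x by rewrite -hd; ring.
    rewrite natz exprS.
    transitivity (3 * 3 ^+ i * (d + k%:Z * e) + 9 * 3 ^+ i * w); first ring.
    rewrite ht; ring.
  exact: dvdz_mulr.
have [w2 hw2] := @gib_liftk a b i k (n+2) ltac:(lia).
have -> : (n + k * (8 * 3 ^ i) + 2 = n + 2 + k * (8 * 3 ^ i))%N by lia.
rewrite hw2 -/e.
apply: contra he => h.
have -> : e = (e + 3 * 3 ^+ i * k%:R * gib a b (n + 2 + 2) + 9 * 3 ^+ i * w2)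
   - 3 * (3 ^+ i * k%:R * gib a b (n + 2 + 2) + 3 * 3 ^+ i * w2) by ring.
by rewrite rpredB // dvdz_mulr.
Qed.

Definition stp (m : int) (pr : int * int) : int * int := (pr.2, ((pr.1 + pr.2) %% m)%Z).

Lemma iter_gp (m a b : int) n :
  iter n (stp m) ((a %% m)%Z, (b %% m)%Z) = (((gib_pair a b n).1 %% m)%Z, ((gib_pair a b n).2 %% m)%Z).
Proof.
elim: n => [|n IH] //=; rewrite IH /stp /=; congr (_,_).
by rewrite modzDm.
Qed.

Fixpoint trajf (m : int) (k : nat) (x y : int) : seq int :=
  match k with 0%N => [::] | k'.+1 => x :: trajf m k' y ((x + y) %% m)%Z end.

Lemma traj_nth m k : forall x y n, (n < k)%N -> nth 0 (trajf m k x y) n = (iter n (stp m) (x, y)).1.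
Proof.
elim: k => [|k IH] x y [|n] // hn.
by rewrite iterSr /= IH.
Qed.

Lemma size_traj m k x y : size (trajf m k x y) = k.
Proof. by elim: k x y => //= k IH x y; rewrite IH. Qed.

Lemma traj_mem m k x y n : (n < k)%N -> (iter n (stp m) (x, y)).1 \in trajf m k x y.
Proof. by move=> hn; rewrite -(@traj_nth m k) // mem_nth // size_traj. Qed.

Lemma traj_memP m k x y z : z \in trajf m k x y -> exists n, (n < k)%N /\ (iter n (stp m) (x, y)).1 = z.
Proof.
move=> h; exists (index z (trajf m k x y)).
have hi : (index z (trajf m k x y) < k)%N by rewrite -{2}(size_traj m k x y) index_mem.
by split => //; rewrite -(@traj_nth m k) // nth_index.
Qed.

Lemma period_sound m P x y : iter P (stp m) (x, y) = (x, y) ->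
  forall n, iter n (stp m) (x, y) = iter (n %% P) (stp m) (x, y).
Proof.
move=> hP n; rewrite {1}(divn_eq n P).
elim: (n %/ P)%N => [|q IH]; first by rewrite mul0n add0n.
by rewrite mulSn -addnA addnC iterD hP IH.
Qed.

Definition ichk (m P a b : nat) : bool :=
  (iter P (stp m) (a%:Z, b%:Z) == (a%:Z, b%:Z)) &&
  let t := trajf m P a b in has (fun x : nat => x%:Z \notin t) (iota 0 m).
Definition iall (m P : nat) := all (fun a => all (fun b => ichk m P a b) (iota 0 m)) (iota 0 m).

Lemma modz_nat (x : int) (m : nat) : (0 < m)%N ->
  (x %% m)%Z = (`|(x %% m)%Z|%N)%:Z /\ (`|(x %% m)%Z| < m)%N.
Proof.
move=> m0.
have h0 : (0 <= (x %% m)%Z) by rewrite modz_ge0 // -lt0n.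
have h1 : ((x %% m)%Z < m%:Z) by rewrite ltz_pmod // ltz_nat.
split; first by rewrite gez0_abs.
lia.
Qed.

Lemma gib_iter (a b : int) (m : nat) n : (1 <= n)%N ->
  (gib a b n %% m)%Z = (iter n.-1 (stp m) ((a %% m)%Z, (b %% m)%Z)).1.
Proof. by move=> _; rewrite iter_gp. Qed.

Lemma iall_sound m P : (0 < m)%N -> (0 < P)%N -> iall m P -> forall a b, ~ complete_mod a b m.
Proof.
move=> m0 P0 hall a b hc.
have [ea la] := modz_nat a m0. have [eb lb] := modz_nat b m0.
move: hall; rewrite /iall.
move/allP/(_ `|(a %% m)%Z|%N); rewrite mem_iota add0n => /(_ la).
move/allP/(_ `|(b %% m)%Z|%N); rewrite mem_iota add0n => /(_ lb).
rewrite /ichk -ea -eb => /andP [/eqP hP /hasP [x]].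
rewrite mem_iota add0n => /andP [_ xm] hx.
have [n [hn hm]] := hc x%:Z.
move: hm; rewrite gib_iter // (period_sound hP) (@modz_small x%:Z) ?ltz_nat // => hm.
move/negP: hx; apply; rewrite -hm; apply: traj_mem; exact: ltn_pmod.
Qed.

Definition cchk (m N a b : nat) : bool := let t := trajf m N a b in all (fun x : nat => x%:Z \in t) (iota 0 m).
Definition call (m N : nat) := all (fun a => all (fun b =>
   (gcdn (gcdn a b) m != 1%N) || cchk m N a b) (iota 0 m)) (iota 0 m).

Lemma call_sound m N : (0 < m)%N -> call m N -> forall a b, coprimez a b -> complete_mod a b m.
Proof.
move=> m0 hall a b cab x.
have [ea la] := modz_nat a m0. have [eb lb] := modz_nat b m0. have [ex lx] := modz_nat x m0.
move: hall; rewrite /call.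
move/allP/(_ `|(a %% m)%Z|%N); rewrite mem_iota add0n => /(_ la).
move/allP/(_ `|(b %% m)%Z|%N); rewrite mem_iota add0n => /(_ lb).
case/orP.
  set g := gcdn _ _ => hg; exfalso; move/negP: hg; apply.
  have gm : (g %| m)%N by rewrite /g dvdn_gcdr.
  have ga : (g %| `|(a %% m)%Z|)%N by rewrite /g (dvdn_trans (dvdn_gcdl _ _)) // dvdn_gcdl.
  have gb : (g %| `|(b %% m)%Z|)%N by rewrite /g (dvdn_trans (dvdn_gcdl _ _)) // dvdn_gcdr.
  have gaz : (g%:Z %| a)%Z.
    rewrite (divz_eq a m) ea; apply: rpredD; first exact: dvdz_mull.
    exact: ga.
  have gbz : (g%:Z %| b)%Z.
    rewrite (divz_eq b m) eb; apply: rpredD; first exact: dvdz_mull.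
    exact: gb.
  have : (g%:Z %| gcdz a b)%Z by rewrite dvdz_gcd gaz gbz.
  by rewrite (eqP cab) dvdz1.
move/allP/(_ `|(x %% m)%Z|%N); rewrite mem_iota add0n => /(_ lx) hmem.
have [n [_ hn]] := traj_memP hmem.
exists n.+1; split => //; apply/eqP.
by rewrite gib_iter // /= ea eb hn -ex.
Qed.

Section Sq.
Variable K : finFieldType.
Hypothesis two : (2 : K) != 0.

Definition sqset := [set x : K | [exists y, y * y == x]].

Lemma sqset_card : (#|K| <= 2 * #|sqset|)%N.
Proof.
pose g (x : K) := (x * x, (enum_rank x <= enum_rank (- x))%N).
have ginj : injective g.
  move=> x y [] exy eb.
  have : (x - y) * (x + y) == 0.
    have -> : (x - y) * (x + y) = x * x - y * y by ring.
    by rewrite exy subrr.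
  rewrite mulf_eq0 => /orP [|]; first by rewrite subr_eq0 => /eqP.
  rewrite addr_eq0 => /eqP hy; subst x.
  rewrite opprK in eb.
  have huv : enum_rank y = enum_rank (- y).
    apply: val_inj => /=.
    case/orP: (leq_total (enum_rank y) (enum_rank (- y))) => h.
      by apply/eqP; rewrite eqn_leq h eb h.
    by apply/eqP; rewrite eqn_leq h -eb h.
  move/enum_rank_inj: huv => hyy.
  have : 2 * y == 0 by rewrite mulr2n mulrDl mul1r {2}hyy subrr.
  by rewrite mulf_eq0 (negbTE two) /= => /eqP ->; rewrite oppr0.
have sub : [set g x | x in K] \subset setX sqset [set: bool].
  apply/subsetP => z /imsetP [x _ ->]; rewrite inE /= !inE andbT.
  by apply/existsP; exists x.
have := subset_leq_card sub; rewrite cardsX cardsT card_bool card_imset //.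
by rewrite cardT /= -cardT => h; rewrite mulnC.
Qed.

Hypothesis oddK : odd #|K|.

Lemma sq_class (t u : K) : t \notin sqset -> u \notin sqset -> exists m, t = u * (m * m).
Proof.
move=> ht hu.
have u0 : u != 0 by apply: contra hu => /eqP ->; rewrite inE; apply/existsP; exists 0; rewrite mulr0.
pose S0 := sqset :\ 0.
have muinj : injective (fun x : K => u * x) by apply: mulfI.
have sub : [set u * x | x in S0] \subset ~: sqset.
  apply/subsetP => z /imsetP [x]; rewrite !inE => /andP [x0 /existsP [m /eqP hm]] ->.
  apply: contra hu => /existsP [n /eqP hn]; rewrite inE; apply/existsP; exists (n / m).
  have m0 : m != 0 by apply: contra x0 => /eqP m0; rewrite -hm m0 mulr0.
  have e1 : u * (m * m) = n * n by rewrite hm hn.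
  apply/eqP; apply: (mulIf (mulf_neq0 m0 m0)); rewrite e1; field; exact: m0.
have c1 := sqset_card.
have c0 : (0 : K) \in sqset by rewrite inE; apply/existsP; exists 0; rewrite mulr0.
have cS0 : #|S0| = (#|sqset| - 1)%N by rewrite /S0 [in RHS](cardsD1 0 sqset) c0 /= addKn.
have eqs : [set u * x | x in S0] = ~: sqset.
  apply/eqP; rewrite eqEcard sub /= card_imset //.
  have := cardsC sqset. rewrite cS0. move: oddK c1. move: #|K| #|sqset| #|~: sqset|. move=> k s c. lia.
have : t \in ~: sqset by rewrite inE.
rewrite -eqs => /imsetP [x]; rewrite !inE => /andP [_ /existsP [m /eqP hm]] ->.
by exists m; rewrite hm.
Qed.
End Sq.

Lemma miss_period (T : finType) (H : nat -> T) P : (0 < P)%N -> (P < #|T|)%N ->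
  (forall k, H (k + P)%N = H k) -> exists y, forall k, H k != y.
Proof.
move=> P0 PT HP.
pose A := [set H (val i) | i : 'I_P].
have cA : (#|A| <= P)%N by rewrite (leq_trans (leq_imset_card _ _)) // card_ord.
have : (0 < #|~: A|)%N by rewrite cardsCs setCK; lia.
case/card_gt0P => y; rewrite inE => yA.
exists y => k; apply: contra yA => /eqP <-.
have hq : forall q r, H (r + q * P)%N = H r.
  elim=> [|q IH] r; first by rewrite mul0n addn0.
  by rewrite mulSnr addnA HP IH.
rewrite (divn_eq k P) addnC hq.
by apply/imsetP; exists (Ordinal (ltn_pmod k P0)).
Qed.

Section Prime.
Variable p : nat.
Hypothesis hp : prime p.
Hypothesis p11 : (11 <= p)%N.

Local Notation K := 'F_p.
Definition hz (z : int) : K := z%:~R.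

Lemma cst_neq0 (q : nat) : prime q -> q != p -> (q%:R : K) != 0.
Proof.
move=> hq hqp; rewrite -(dvdn_pcharf (pchar_Fp hp)) dvdn_prime2 //.
by rewrite eq_sym.
Qed.

Lemma two0 : (2 : K) != 0. Proof. apply: cst_neq0 => //; apply/eqP; lia. Qed.
Lemma three0 : (3 : K) != 0. Proof. apply: cst_neq0 => //; apply/eqP; lia. Qed.
Lemma five0 : (5 : K) != 0. Proof. apply: cst_neq0 => //; apply/eqP; lia. Qed.
Lemma seven0 : (7 : K) != 0. Proof. apply: cst_neq0 => //; apply/eqP; lia. Qed.

Lemma oddK : odd #|K|.
Proof. rewrite card_Fp //; case: (even_prime hp) => // h; lia. Qed.

Lemma hz_surj (y : K) : hz ((y : nat)%:Z) = y.
Proof. by rewrite /hz -natz mulrz_nat; exact: natr_Zp. Qed.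

Lemma nonsq_scale (s w : K) : (forall z : K, z * z != 5) -> w != 0 -> s * s != 5 * (w * w).
Proof.
move=> ns w0; apply/eqP => h; move/eqP: (ns (s / w)); apply.
have -> : s / w * (s / w) = (s * s) / (w * w) by field.
by rewrite h; field.
Qed.

Lemma fermat1 (x : K) : x != 0 -> x ^+ (p.-1) = 1.
Proof.
move=> x0; apply: (mulIf x0); rewrite mul1r -exprSr prednK ?prime_gt0 //.
by have := expf_card x; rewrite card_Fp.
Qed.

Lemma fib_period (s : K) : s * s = 5 ->
  hz (gib_pair 1 0 p.-1).1 = 1 /\ hz (gib_pair 1 0 p.-1).2 = 0.
Proof.
move=> hs.
have t0 := two0.
have f0 : (4 : K) != 0.
  have -> : (4 : K) = 2 * 2 by ring.
  exact: mulf_neq0.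
pose ph := (1 + s) / 2. pose ps := (1 - s) / 2.
have pp : ph * ps = -1.
  have -> : ph * ps = (1 - s * s) / 4 by rewrite /ph /ps; field; rewrite ?f0 ?t0.
  by rewrite hs; field; rewrite ?f0 ?t0.
have key1 : forall X Y : K, X + Y - ps * Y - ph * (Y - ps * X) = X * (1 + ph * ps).
  by move=> X Y; rewrite /ph /ps; field; rewrite ?f0 ?t0.
have key2 : forall X Y : K, X + Y - ph * Y - ps * (Y - ph * X) = X * (1 + ph * ps).
  by move=> X Y; rewrite /ph /ps; field; rewrite ?f0 ?t0.
pose X k := hz (gib_pair 1 0 k).1. pose Y k := hz (gib_pair 1 0 k).2.
have c1 : forall k, Y k - ps * X k = - ps * ph ^+ k.
  elim=> [|k IH]; first by rewrite /X /Y /hz /= expr0; ring.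
  rewrite exprS mulrCA -IH /X /Y gp_S /= /hz intrD -/(hz _) -!/(hz _).
  apply/eqP; rewrite -subr_eq0; apply/eqP.
  by rewrite key1 pp subrr mulr0.
have c2 : forall k, Y k - ph * X k = - ph * ps ^+ k.
  elim=> [|k IH]; first by rewrite /X /Y /hz /= expr0; ring.
  rewrite exprS mulrCA -IH /X /Y gp_S /= /hz intrD -/(hz _) -!/(hz _).
  apply/eqP; rewrite -subr_eq0; apply/eqP.
  by rewrite key2 pp subrr mulr0.
have ph0 : ph != 0 by apply/eqP => h; move: pp; rewrite h mul0r => /esym/eqP; rewrite oppr_eq0 oner_eq0.
have ps0 : ps != 0 by apply/eqP => h; move: pp; rewrite h mulr0 => /esym/eqP; rewrite oppr_eq0 oner_eq0.
have := c1 p.-1; have := c2 p.-1; rewrite !fermat1 // !mulr1 => e2 e1.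
have s0 : s != 0 by apply/eqP => h; move: hs; rewrite h mulr0 => /esym/eqP; rewrite (negbTE five0).
have dd : ph - ps = s by rewrite /ph /ps; field; rewrite ?f0 ?t0.
have hX : X p.-1 = 1.
  apply: (mulIf s0); rewrite mul1r -dd.
  have -> : X p.-1 * (ph - ps) = (Y p.-1 - ps * X p.-1) - (Y p.-1 - ph * X p.-1) by ring.
  by rewrite e1 e2; ring.
split; first exact: hX.
change (Y p.-1 = 0).
have -> : Y p.-1 = (Y p.-1 - ps * X p.-1) + ps * X p.-1 by ring.
by rewrite e1 hX; ring.
Qed.

Hypothesis p13 : p != 13%N.
Hypothesis p17 : p != 17%N.

Lemma seventeen0 : (17 : K) != 0. Proof. by apply: cst_neq0 => //; rewrite eq_sym. Qed.

Lemma prime_miss a b : exists y : K, forall n, (1 <= n)%N -> hz (gib a b n) != y.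
Proof.
have t0 := two0.
case: (boolP [exists s : K, s * s == 5]) => [/existsP [s /eqP hs] | ns].
  have [h1 h2] := fib_period hs.
  pose H k := hz (gib_pair a b k).1.
  have HP : forall k, H (k + p.-1)%N = H k.
    move=> k; rewrite /H gp_add /= /hz intrD !intrM -!/(hz _) h1 h2; ring.
  have P0 : (0 < p.-1)%N by lia.
  have PT : (p.-1 < #|K|)%N by rewrite card_Fp //; lia.
  have [y hy] := miss_period P0 PT HP.
  by exists y => n _; exact: hy.
have ns' : forall z : K, z * z != 5.
  by move=> z; apply/negP => h; move/negP: ns; apply; apply/existsP; exists z.
pose c := hz (nrm (a, b)).
have key : forall v : K, (forall s, s * s != 5 * v ^+ 2 + 4 * c) -> (forall s, s * s != 5 * v ^+ 2 - 4 * c) ->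
    forall n, (1 <= n)%N -> hz (gib a b n) != v.
  move=> v hv1 hv2 n _; apply/eqP => hv.
  have hn := gp_nrm a b n.-1.
  have E : nrm (gib_pair a b n.-1) = nrm (a, b) \/ nrm (gib_pair a b n.-1) = - nrm (a, b).
    by rewrite hn -signr_odd; case: (odd n.-1); [right|left]; rewrite ?expr1 ?expr0; ring.
  set X := hz (gib_pair a b n.-1).1. set Y := hz (gib_pair a b n.-1).2.
  have hX : X = v by [].
  have hN : hz (nrm (gib_pair a b n.-1)) = Y * Y - Y * X - X * X.
    by rewrite /nrm !expr2 /hz !intrB !intrM.
  have sq : (2 * Y - X) * (2 * Y - X) = 5 * X ^+ 2 + 4 * (Y * Y - Y * X - X * X) by ring.
  rewrite -hN hX in sq.
  case: E => E; rewrite E in sq.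
    by move/eqP: (hv1 (2 * Y - v)); apply; rewrite sq.
  move/eqP: (hv2 (2 * Y - v)); apply; rewrite sq /hz intrN -/(hz _); ring.
have thirty0 : (30 : K) != 0.
  have -> : (30 : K) = 2 * 3 * 5 by ring.
  by rewrite !mulf_neq0 // ?three0 ?five0.
case c0: (c == 0).
  exists 1; apply: key => s; rewrite (eqP c0) mulr0 ?addr0 ?subr0 expr1n mulr1; exact: ns'.
pose t := c / 30.
have hc : c = 30 * t by rewrite /t; field; rewrite thirty0.
have t0' : t != 0 by apply/eqP => h; move: c0; rewrite hc h mulr0 eqxx.
have hK := oddK.
case: (boolP (t \in sqset K)).
  rewrite inE => /existsP [l /eqP hl].
  have l0 : l != 0 by apply/eqP => h; move: t0'; rewrite -hl h mulr0 eqxx.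
  exists (5 * l); apply: key => s.
    have -> : 5 * (5 * l) ^+ 2 + 4 * c = 5 * ((7 * l) * (7 * l)) by rewrite hc -hl; ring.
    by apply: nonsq_scale => //; rewrite mulf_neq0 // seven0.
  have -> : 5 * (5 * l) ^+ 2 - 4 * c = 5 * (l * l) by rewrite hc -hl; ring.
  by apply: nonsq_scale.
move=> tn.
have fn : (5 : K) \notin sqset K.
  by rewrite inE; apply/existsP => [[z /eqP hz5]]; move: (ns' z); rewrite hz5 eqxx.
have [m hm] := sq_class t0 hK tn fn.
have m0 : m != 0 by apply/eqP => h; move: t0'; rewrite hm h mulr0 mulr0 eqxx.
exists (13 * m); apply: key => s.
  have -> : 5 * (13 * m) ^+ 2 + 4 * c = 5 * ((17 * m) * (17 * m)) by rewrite hc hm; ring.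
  by apply: nonsq_scale => //; rewrite mulf_neq0 // seventeen0.
have -> : 5 * (13 * m) ^+ 2 - 4 * c = 5 * ((7 * m) * (7 * m)) by rewrite hc hm; ring.
by apply: nonsq_scale => //; rewrite mulf_neq0 // seven0.
Qed.

Lemma prime_incomplete a b : ~ complete_mod a b p.
Proof.
move=> hc; have [y hy] := prime_miss a b.
have [n [hn /eqP hm]] := hc ((y : nat)%:Z).
move: hm; rewrite eqz_mod_dvd (dvdz_pcharf (pchar_Fp hp)) intrB subr_eq0 => /eqP.
rewrite -/(hz _) -/(hz _) hz_surj => h.
by move: (hy n hn); rewrite h eqxx.
Qed.

End Prime.

Lemma luc5_ok : ichk 5 4 1 3. Proof. by vm_compute. Qed.

Lemma lucas_nz n : (1 <= n)%N -> (lucas n %% 5)%Z != 0.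
Proof.
move=> hn; move: luc5_ok; rewrite /ichk => /andP [/eqP hP _].
have := @gib_iter 1 3 5 n hn; rewrite /lucas => ->.
rewrite (period_sound hP).
have : (iter (n.-1 %% 4) (stp 5) (1, 3)).1 \in trajf 5 4 1 3 by apply: traj_mem; rewrite ltn_pmod.
have -> : (((1 : int) %% 5)%Z, ((3 : int) %% 5)%Z) = (1, 3) by [].
move: (iter _ _ _) => pr.
by rewrite /= !inE; apply: contraL => /eqP ->.
Qed.

Lemma compl_dvd a b m d : complete_mod a b m -> (d %| m)%N -> complete_mod a b d.
Proof.
move=> hc hd x; have [n [hn hm]] := hc x; exists n; split => //.
apply/eqP; rewrite eqz_mod_dvd; move/eqP: hm; rewrite eqz_mod_dvd.
by apply: dvdz_trans.
Qed.

Lemma compl3 a b j : coprimez a b -> (1 <= j)%N -> complete_mod a b (3 ^ j).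
Proof.
move=> cab hj.
have hab : ~~ ((3 %| a)%Z && (3 %| b)%Z).
  apply/negP => /andP [h1 h2].
  have : (3 %| gcdz a b)%Z by rewrite dvdz_gcd h1 h2.
  by rewrite (eqP cab) dvdz1.
move=> x; have [n [hn [hd _]]] := lift3 hab j.-1 x.
exists n; split => //; apply/eqP; rewrite eqz_mod_dvd.
suff -> : ((3 ^ j)%N : int) = 3 * 3 ^+ j.-1 by [].
by rewrite -natz natrX -exprS prednK.
Qed.

Lemma c2 : call 2 3. Proof. by vm_compute. Qed.
Lemma c4 : call 4 6. Proof. by vm_compute. Qed.
Lemma c6 : call 6 24. Proof. by vm_compute. Qed.
Lemma c7 : call 7 16. Proof. by vm_compute. Qed.
Lemma c14 : call 14 48. Proof. by vm_compute. Qed.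
Lemma i8 : iall 8 12. Proof. by vm_compute. Qed.
Lemma i12 : iall 12 24. Proof. by vm_compute. Qed.
Lemma i18 : iall 18 24. Proof. by vm_compute. Qed.
Lemma i21 : iall 21 16. Proof. by vm_compute. Qed.
Lemma i28 : iall 28 48. Proof. by vm_compute. Qed.
Lemma i13 : iall 13 28. Proof. by vm_compute. Qed.
Lemma i17 : iall 17 36. Proof. by vm_compute. Qed.
Lemma i49 : iall 49 112. Proof. by vm_compute. Qed.

Definition Sset (m : nat) : Prop :=
  m \in [:: 2; 4; 6; 7; 14]%N \/ exists j : nat, (1 <= j)%N /\ m = (3 ^ j)%N.

Lemma no5 a b : (exists r : nat, forall n : nat, (1 <= n)%N ->
     (gib a b n = lucas (n + r) %[mod 5])%Z) -> ~ complete_mod a b 5.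
Proof.
move=> [r hr] hc; have [n [hn hm]] := hc 0.
have := lucas_nz (n := (n + r)%N) ltac:(lia).
by rewrite -(hr n hn) hm.
Qed.

Lemma suff_S a b m : coprimez a b -> Sset m -> inM a b m.
Proof.
move=> cab [hm|[j [hj ->]]].
  move: hm; rewrite !inE => /orP [/eqP->|/orP[/eqP->|/orP[/eqP->|/orP[/eqP->|/eqP->]]]];
  split => //.
  - exact: (@call_sound 2 _ isT c2 a b cab).
  - exact: (@call_sound 4 _ isT c4 a b cab).
  - exact: (@call_sound 6 _ isT c6 a b cab).
  - exact: (@call_sound 7 _ isT c7 a b cab).
  - exact: (@call_sound 14 _ isT c14 a b cab).
split; last exact: compl3.
by case: j hj => // j _; rewrite expnS; have := expn_gt0 3 j; lia.
Qed.

Lemma nec_S a b m : ~ complete_mod a b 5 -> inM a b m -> Sset m.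
Proof.
move=> h5 [m2 hc].
have m0 : (0 < m)%N by lia.
have bad : forall d P, (0 < d)%N -> (0 < P)%N -> iall d P -> ~~ (d %| m)%N.
  by move=> d P d0 P0 hi; apply/negP => hd; exact: (iall_sound d0 P0 hi (compl_dvd hc hd)).
have := @struct m m0.
have hq : forall q, prime q -> (q %| m)%N -> q \in [:: 2; 3; 7]%N.
  move=> q qp qd; have hcq := compl_dvd hc qd.
  case: (ltnP q 11) => q11.
    have : q \in [:: 2; 3; 5; 7]%N.
      have chk : all (fun q => prime q ==> (q \in [:: 2; 3; 5; 7]%N)) (iota 0 11) by vm_compute.
      move/allP: chk => /(_ q); rewrite mem_iota add0n q11 => /(_ isT).
      by rewrite qp.
    rewrite !inE => /orP [h|/orP [h|/orP [h|h]]].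
    - by rewrite h.
    - by rewrite h orbT.
    - by exfalso; apply: h5; rewrite -(eqP h).
    - by rewrite h !orbT.
  case: (eqVneq q 13) => q13.
    by exfalso; subst q; exact: (@iall_sound 13 28 isT isT i13 a b hcq).
  case: (eqVneq q 17) => q17.
    by exfalso; subst q; exact: (@iall_sound 17 36 isT isT i17 a b hcq).
  by exfalso; exact: (prime_incomplete qp q11 q13 q17 hcq).
move=> /(_ hq).
rewrite (bad 8 12 _ _ i8) // (bad 12 24 _ _ i12) // (bad 18 24 _ _ i18) //
  (bad 21 16 _ _ i21) // (bad 28 48 _ _ i28) // (bad 49 112 _ _ i49) //.
move=> /(_ isT) [hm|hm]; last by right.
left; move: hm m2; rewrite !inE => /orP [/eqP->//|] h _; exact: h.
Qed.

Unset Implicit Arguments.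

Theorem mainTheorem14 (a b : int) :
  coprimez a b ->
  (exists r : nat, forall n : nat, (1 <= n)%N ->
     (gib a b n = lucas (n + r) %[mod 5])%Z) ->
  (forall m : nat, inM a b m <-> inML m) /\
  (forall m : nat, inML m <->
     (m \in [:: 2; 4; 6; 7; 14]%N \/ exists j : nat, (1 <= j)%N /\ m = (3 ^ j)%N)).
Proof.
move=> cab hr.
have h5 := no5 hr.
have l5 : ~ complete_mod 1 3 5 by apply: no5; exists 0%N => n _; rewrite addn0.
have c13 : coprimez 1 3 by [].
have eL : forall m, inML m <-> Sset m.
  by move=> m; split; [exact: nec_S l5 | exact: suff_S c13].
split; last exact: eL.
move=> m; rewrite eL; split; [exact: nec_S h5 | exact: suff_S cab].
Qed.
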